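(* Let $d\ge1$ and let $\mathcal{P}$ be a $d$-partition of $\mathbb{Z}^n$ that is invariant under the action of $\mathbb{Z}^n$. Then every block $S\in\mathcal{P}$ is either $d$-sparse or a non-trivial affine sublattice of $\mathbb{Z}^n$, i.e. $S=\mathbf v+L$ for some $\mathbf v\in\mathbb{Z}^n$ and some sublattice $L$ with $\{\mathbf 0\}\subsetneq L\subsetneq\mathbb{Z}^n$.
   Context: A $d$-partition of a set $E$ ($|E|\ge d+1$) is a collection $\mathcal P$ of subsets of $E$ (blocks) with $|\mathcal P|\ge2$, every block of size $\ge d$, and every $d$-element subset of $E$ contained in exactly one block. $\mathbb{Z}^n$ acts on subsets by $\mathbf u+S=\{\mathbf u+\mathbf v:\mathbf v\in S\}$ and on collections of subsets by $\mathbf u+\mathcal P=\{\mathbf u+S:S\in\mathcal P\}$; $\mathcal P$ is invariant if $\mathbf u+\mathcal P=\mathcal P$ for all $\mathbf u\in\mathbb{Z}^n$. A subset $S\subset\mathbb{Z}^n$ is $d$-sparse if there is no $\mathbf u\in\mathbb{Z}^n\setminus\{\mathbf 0\}$ with $|S\cap(\mathbf u+S)|\ge d$. *)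

(* Defs.v *)
From mathcomp Require Import all_boot all_order all_algebra.
Set Implicit Arguments. Unset Strict Implicit. Unset Printing Implicit Defensive.
Import GRing.Theory.
Local Open Scope ring_scope.

Notation point n := 'rV[int]_n.

Definition subset_of (n : nat) := point n -> Prop.

Definition card_ge (n : nat) (A : subset_of n) (k : nat) : Prop :=
  exists s : seq (point n), [/\ uniq s, size s = k & forall x, x \in s -> A x].

Definition translate (n : nat) (u : point n) (S : subset_of n) : subset_of n :=
  fun x => S (x - u).

Definition Zn_invariant (n : nat) (P : subset_of n -> Prop) : Prop :=
  forall u : point n, forall B : subset_of n,
    (exists S, P S /\ B = translate u S) <-> P B.

Definition d_partition (n d : nat) (P : subset_of n -> Prop) : Prop :=
  [/\ card_ge (fun _ : point n => True) d.+1,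
      exists B1 B2, [/\ P B1, P B2 & B1 <> B2],
      forall B, P B -> card_ge B d
    & forall s : seq (point n), uniq s -> size s = d ->
        exists B, [/\ P B, (forall x, x \in s -> B x) &
          forall B', P B' -> (forall x, x \in s -> B' x) -> B' = B]].

Definition d_sparse (n d : nat) (S : subset_of n) : Prop :=
  ~ exists u : point n, u != 0 /\ card_ge (fun x => S x /\ translate u S x) d.

Definition sublattice (n : nat) (L : subset_of n) : Prop :=
  [/\ L 0, (forall x y, L x -> L y -> L (x + y)) & forall x, L x -> L (- x)].

Definition nontrivial_affine_sublattice (n : nat) (S : subset_of n) : Prop :=
  exists (v : point n) (L : subset_of n),
    [/\ sublattice L, (exists x, L x /\ x != 0), (exists y, ~ L y)
      & forall x, S x <-> L (x - v)].

(* Main.v *)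
Require Import Defs.
From mathcomp Require Import all_boot all_order all_algebra.
From Stdlib Require Import Classical.
Import GRing.Theory Num.Theory.
Local Open Scope ring_scope.

Lemma natmul_inj {n : nat} {u : point n} {i j : nat} :
  u != 0 -> u *+ i = u *+ j -> i = j.
Proof.
move=> /eqP u0 e.
have [k hk] : exists k, u 0 k != 0.
  apply: NNPP => H; apply: u0; apply/matrixP => a b.
  rewrite mxE (ord1 a); apply: NNPP => H2; apply: H; exists b; exact/eqP.
have := congr1 (fun M : point n => M 0 k) e; rewrite /= !mulmxnE.
exact: (mulrIn hk).
Qed.

Lemma aux1 (V : zmodType) (x w v : V) : x + w - (x - v) = v + w.
Proof. by rewrite opprB addrC addrA subrK. Qed.
Lemma aux2 (V : zmodType) (x v : V) : x - (x - v) = v.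
Proof. by rewrite opprB addrC subrK. Qed.

Lemma blocks_eq {n d : nat} {P : subset_of n -> Prop} {A B : subset_of n}
  {s : seq (point n)} :
  d_partition d P -> P A -> P B -> uniq s -> size s = d ->
  (forall x, x \in s -> A x) -> (forall x, x \in s -> B x) -> A = B.
Proof.
case=> _ _ _ H PA PB us ss hA hB.
have [C [_ _ HC]] := H s us ss.
by rewrite (HC A PA hA) (HC B PB hB).
Qed.

Theorem mainTheorem4 (n d : nat) (P : subset_of n -> Prop) :
  (1 <= d)%N -> d_partition d P -> Zn_invariant P ->
  forall S, P S -> d_sparse d S \/ nontrivial_affine_sublattice S.
Proof.
move=> d1 dP inv S PS.
have trP : forall u T, P T -> P (translate u T).
  by move=> u T PT; apply/(inv u); exists T.
case: (classic (d_sparse d S)) => [|nsp]; first by left.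
right.
have [u [u0 [s [us ss hs]]]] : exists u : point n, u != 0 /\
   card_ge (fun x => S x /\ translate u S x) d by exact: NNPP.
pose L := fun x : point n => forall y, S y <-> S (y - x).
have Lsub : sublattice L.
  split.
  - by move=> y; rewrite subr0.
  - move=> x y Lx Ly z; rewrite opprD addrA.
    split => H.
      exact: (proj1 (Ly _) (proj1 (Lx z) H)).
    exact: (proj2 (Lx z) (proj2 (Ly _) H)).
  - move=> x Lx z; rewrite opprK.
    by have := Lx (z + x); rewrite addrK => ->.
have Ltr : forall x, translate x S = S -> L x.
  move=> x e y; rewrite -{1}e /translate; done.
have Lu : L u.
  apply: Ltr; apply: (blocks_eq dP (trP u S PS) PS us ss).
  - by move=> x /hs [].
  - by move=> x /hs [].
have Lun : forall k, L (u *+ k).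
  elim=> [|k IH]; first by case: Lsub.
  by rewrite mulrS; case: Lsub => _ HD _; apply: HD.
have [v Sv] : exists v, S v.
  case: s us ss hs => [|v s'] _ ss' hs; first by rewrite -ss' in d1.
  exists v.
  by case: (hs v (mem_head _ _)).
exists v, L; split => //.
- by exists u.
- apply: NNPP => H.
  have allL : forall y, L y by move=> y; apply: NNPP => Hy; apply: H; exists y.
  have allS : forall x, S x.
    by move=> x; apply/(allL (x - v) x); rewrite aux2.
  have [_ [B1 [B2 [PB1 PB2 ne]]] blk _] := dP.
  have [B [PB nBS]] : exists B, P B /\ B <> S.
    case: (classic (B1 = S)) => [e|]; last by exists B1.
    by exists B2; split => // e2; apply: ne; rewrite e e2.
  have [t [ut st ht]] := blk B PB.
  by apply: nBS; apply: (blocks_eq dP PB PS ut st ht).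
- move=> x; split => [Sx|Lx].
  + apply: Ltr.
    pose t := mkseq (fun k => x + u *+ k) d.
    apply: (blocks_eq (s := t) dP (trP _ S PS) PS).
    * rewrite map_inj_uniq ?iota_uniq // => i j /addrI.
      exact: natmul_inj.
    * by rewrite size_mkseq.
    * move=> y /mapP [k _ ->]; rewrite /translate.
      rewrite aux1.
      by apply/(Lun k (v + u *+ k)); rewrite addrK.
    * move=> y /mapP [k _ ->].
      by apply/(Lun k (x + u *+ k)); rewrite addrK.
  + by apply/(Lx x); rewrite aux2.
Qed.
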